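(* The optimal value of problem (D) equals the optimal value of the mixed-integer linear program: minimize $B$ over $B\in\mathbb{N}$ and $\gamma\in\{0,1\}^{\mathcal{C}\times\mathcal{N}}$ subject to $\sum_{g\in\mathcal{N}}\gamma_{c,g}=|\mathcal{N}_c|$ for all $c\in\mathcal{C}$; $\sum_{c\in\mathcal{C}}\gamma_{c,g}=1$ for all $g\in\mathcal{N}$; $B\ge\frac{1}{v_c}\sum_{g\in\mathcal{N}}g\,\gamma_{c,g}$ for all $c\in\mathcal{C}$; and $B\ge N$. Moreover, from any optimal solution $(B,\gamma)$ of this program one can construct a feasible solution of (D) with the same value $B$.
   Context: A ballot style consists of contests $\mathcal{C}=\{1,\ldots,C\}$, candidates $\mathcal{N}=\{1,\ldots,N\}$ (identified with the integers $1,\ldots,N$) partitioned into nonempty sets $\mathcal{N}_c$ ($c\in\mathcal{C}$), and positive integers $v_c$. $\mathscr{B}=\{\beta\subseteq\mathcal{N}: |\mathcal{N}_c\cap\beta|\le v_c\ \forall c\}$. Problem (D): minimize $B$ over $B\in\mathbb{N}$ and $\beta_1,\ldots,\beta_B\in\mathscr{B}$ subject to $|\{b\in\{1,\ldots,B\}: i\in\beta_b\}|\neq|\{b\in\{1,\ldots,B\}: j\in\beta_b\}|$ for all distinct $i,j\in\mathcal{N}$, and $|\{b\in\{1,\ldots,B\}: i\in\beta_b\}|\ge1$ for all $i\in\mathcal{N}$. *)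

(* Defs.v *)
From mathcomp Require Import all_boot all_order all_algebra.
Set Implicit Arguments. Unset Strict Implicit. Unset Printing Implicit Defensive.
Import Order.TTheory GRing.Theory Num.Theory.

(* Ballot style: C contests ('I_C), N candidates ('I_N); candidate i : 'I_N
   is identified with the integer label i.+1 in {1,...,N}.
   part i = the contest c with i \in N_c; v c = number of votes allowed. *)

Definition contest_set (C N : nat) (part : 'I_N -> 'I_C) (c : 'I_C) : {set 'I_N} :=
  [set i | part i == c].

Definition valid_ballot (C N : nat) (part : 'I_N -> 'I_C) (v : 'I_C -> nat)
  (beta : {set 'I_N}) : Prop :=
  forall c : 'I_C, #|contest_set part c :&: beta| <= v c.

Definition nvotes (N : nat) (betas : seq {set 'I_N}) (i : 'I_N) : nat :=
  count (fun beta : {set 'I_N} => i \in beta) betas.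

Definition feasD (C N : nat) (part : 'I_N -> 'I_C) (v : 'I_C -> nat)
  (B : nat) (betas : seq {set 'I_N}) : Prop :=
  [/\ size betas = B,
      (forall beta, beta \in betas -> valid_ballot part v beta),
      (forall i j : 'I_N, i != j -> nvotes betas i != nvotes betas j)
    & (forall i : 'I_N, 1 <= nvotes betas i)].

Definition optD (C N : nat) (part : 'I_N -> 'I_C) (v : 'I_C -> nat) (B : nat) : Prop :=
  (exists betas, feasD part v B betas) /\
  (forall B' betas', feasD part v B' betas' -> B <= B').

Definition feasM (C N : nat) (part : 'I_N -> 'I_C) (v : 'I_C -> nat)
  (B : nat) (gamma : 'I_C -> 'I_N -> bool) : Prop :=
  [/\ (forall c : 'I_C, \sum_(g : 'I_N) (gamma c g : nat) = #|contest_set part c|),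
      (forall g : 'I_N, \sum_(c : 'I_C) (gamma c g : nat) = 1),
      (forall c : 'I_C,
          ((v c)%:R^-1 * \sum_(g : 'I_N) ((g.+1)%:R * (gamma c g)%:R)
             <= (B%:R : rat))%R)
    & N <= B].

Definition optM (C N : nat) (part : 'I_N -> 'I_C) (v : 'I_C -> nat)
  (B : nat) (gamma : 'I_C -> 'I_N -> bool) : Prop :=
  feasM part v B gamma /\
  (forall B' gamma', feasM part v B' gamma' -> B <= B').

(* Main.v *)
Require Import Defs.
From mathcomp Require Import all_boot all_order all_algebra.
From mathcomp Require Import zify.
From Stdlib Require Import Classical.
Set Implicit Arguments. Unset Strict Implicit. Unset Printing Implicit Defensive.
Import Order.TTheory GRing.Theory Num.Theory.
Lemma sum_b2n (T : finType) (P : pred T) : \sum_(i : T) (P i : nat) = #|P|.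
Proof.
rewrite -sum1_card [RHS]big_mkcond /=; apply: eq_bigr => i _; by rewrite unfold_in; case: (P i).
Qed.

Definition gam C N (part : 'I_N -> 'I_C) (rho : 'I_N -> 'I_N) :=
  fun c g => [exists i, (part i == c) && (rho i == g)].

Lemma gamE C N (part : 'I_N -> 'I_C) rho c i : injective rho ->
  gam part rho c (rho i) = (part i == c).
Proof.
move=> rinj; apply/existsP/idP.
  by move=> [j /andP [/eqP <- /eqP /rinj ->]].
by move=> h; exists i; rewrite h eqxx.
Qed.

Lemma gamma_feas C N (part : 'I_N -> 'I_C) v (rho : 'I_N -> 'I_N) B :
  injective rho -> N <= B -> (forall c, 0 < v c) ->
  (forall c, \sum_i (rho i).+1 * (part i == c) <= B * v c) ->
  feasM part v B (gam part rho).
Proof.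
move=> rinj NB Hv Hs; split => //.
- move=> c; rewrite (reindex_inj rinj) /=.
  rewrite (eq_bigr (fun i => (part i == c) : nat)); last by move=> i _; rewrite gamE.
  rewrite sum_b2n /contest_set cardsE //.
- move=> g; have /codomP [i ->] := injF_onto rinj g.
  rewrite (eq_bigr (fun c => (part i == c) : nat)); last by move=> c _; rewrite gamE.
  rewrite (bigD1 (part i)) //= eqxx big1 // => c /negbTE; by rewrite eq_sym => ->.
- move=> c; rewrite ler_pdivrMl ?ltr0n ?Hv //.
  rewrite (reindex_inj rinj) /=.
  rewrite (eq_bigr (fun i => (((rho i).+1 * (part i == c))%N)%:R%R)); last first.
    by move=> i _; rewrite gamE // natrM.
  by rewrite -natr_sum -natrM ler_nat mulnC.
Qed.
Lemma inj_bound (T : finType) (A : pred T) (f : T -> nat) m :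
  {in A &, injective f} -> (forall x, x \in A -> f x < m) -> #|A| <= m.
Proof.
move=> finj fb.
have -> : #|A| = size (map f (enum A)) by rewrite size_map cardE.
rewrite -(size_iota 0 m); apply: uniq_leq_size.
  rewrite map_inj_in_uniq ?enum_uniq // => x y; rewrite !mem_enum; exact: finj.
move=> y /mapP [x]; rewrite mem_enum => xA ->; rewrite mem_iota /=; exact: fb.
Qed.

Lemma sum_nvotes C N (part : 'I_N -> 'I_C) v betas c :
  (forall beta, beta \in betas -> valid_ballot part v beta) ->
  \sum_i nvotes betas i * (part i == c) <= size betas * v c.
Proof.
elim: betas => [|b s IH] H /=.
  by rewrite big1 // => i _; rewrite /nvotes /=.
rewrite (eq_bigr (fun i => ((i \in b) * (part i == c)) + nvotes s i * (part i == c)));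
  last by move=> i _; rewrite /nvotes /= mulnDl.
rewrite big_split /= mulSn; apply: leq_add; last first.
  by apply: IH => beta bin; apply: H; rewrite inE bin orbT.
rewrite (eq_bigr (fun i => ((part i == c) && (i \in b)) : nat)); last first.
  by move=> i _; rewrite mulnb andbC.
rewrite sum_b2n; apply: leq_trans (H b (mem_head _ _) c).
by rewrite leq_eqVlt; apply/orP; left; apply/eqP; apply: eq_card => i; rewrite !inE.
Qed.

Lemma D_to_M C N (part : 'I_N -> 'I_C) v B betas :
  (forall c, 0 < v c) ->
  feasD part v B betas -> exists gamma, feasM part v B gamma.
Proof.
move=> Hv [Hsize Hval Hdist Hpos].
set n := nvotes betas.
have ninj : injective n.
  move=> i j e; apply/eqP; apply/negPn/negP => ne; have := Hdist _ _ ne; rewrite -/n; by rewrite e eqxx.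
have nB : forall i, n i <= B by move=> i; rewrite -Hsize /n /nvotes count_size.
set rk := fun i => #|[set j | n j < n i]|.
have rkN : forall i, rk i < N.
  move=> i; have : rk i <= #|[set~ i]|.
    apply: subset_leq_card; apply/subsetP => j; rewrite !inE => h.
    by apply/eqP => e; move: h; rewrite e ltnn.
  rewrite cardsC1 card_ord; have := ltn_ord i; lia.
have rklt : forall i j, n j < n i -> rk j < rk i.
  move=> i j h; apply: proper_card; apply/properP; split.
    apply/subsetP => k; rewrite !inE => h2; exact: ltn_trans h2 h.
  by exists j; rewrite !inE ?h ?ltnn.
have rkb : forall i, (rk i).+1 <= n i.
  move=> i; have : rk i <= (n i).-1.
    apply: inj_bound (fun j => (n j).-1) _ _ _.
      move=> x y _ _ e; apply: ninj; have := Hpos x; have := Hpos y; rewrite -/n; lia.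
    move=> x; rewrite inE => h; have := Hpos x; rewrite -/n; lia.
  have := Hpos i; rewrite -/n; lia.
pose rho i := Ordinal (rkN i).
have rinj : injective rho.
  move=> i j /(congr1 val) /= e; apply/eqP; apply/negPn/negP => ne.
  have := Hdist _ _ ne; rewrite -/n; case: (ltngtP (n i) (n j)) => h _.
  - by have := rklt _ _ h; rewrite e ltnn.
  - by have := rklt _ _ h; rewrite e ltnn.
  - by move: h => /eqP; rewrite -/n => /eqP h; move: (Hdist _ _ ne); rewrite -/n h eqxx.
exists (gam part rho); apply: gamma_feas => //.
- have := @inj_bound _ predT (fun j => (n j).-1) B.
  rewrite cardT size_enum_ord; apply.
    move=> x y _ _ e; apply: ninj; have := Hpos x; have := Hpos y; rewrite -/n; lia.
  move=> x _; have := Hpos x; have := nB x; rewrite -/n; lia.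
- move=> c; rewrite -Hsize; apply: leq_trans (sum_nvotes c Hval).
  by apply: leq_sum => i _; apply: leq_mul => //; exact: rkb.
Qed.
Lemma sum_sub (T : finType) (P Q : pred T) (F : T -> nat) :
  (forall i, P i -> Q i) -> \sum_(i | P i) F i <= \sum_(i | Q i) F i.
Proof.
move=> H; rewrite [X in X <= _]big_mkcond [X in _ <= X]big_mkcond.
apply: leq_sum => i _; case: (boolP (P i)) => [/H -> //|_]; by case: (Q i).
Qed.
Lemma sum_cond_mul (T : finType) (P : pred T) (F : T -> nat) :
  \sum_(i | P i) F i = \sum_i F i * P i.
Proof. rewrite big_mkcond; apply: eq_bigr => i _; by case: (P i); rewrite ?muln1 ?muln0. Qed.

Lemma modp s b B : b < B -> (s + (b + (B - s %% B)) %% B) %% B = b.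
Proof.
move=> bB; have B0 : 0 < B by lia.
rewrite modnDmr {1}(divn_eq s B).
move: (s %/ B) (s %% B) (ltn_pmod s B0) => q r hr.
rewrite (_ : q * B + r + (b + (B - r)) = q.+1 * B + b).
  by rewrite modnMDl modn_small.
rewrite mulSn; nia.
Qed.
Lemma Tsplit N (P : pred 'I_N) (a : 'I_N -> nat) i : P i ->
  \sum_(j | P j && (j <= i)) a j = \sum_(j | P j && (j < i)) a j + a i.
Proof.
move=> Pi; rewrite (bigD1 i) /=; last by rewrite Pi leqnn.
rewrite addnC; congr (_ + _); apply: eq_bigl => j.
rewrite ltn_neqAle; case: (P j) => //=; rewrite andbC; done.
Qed.
Lemma rot_count B r a : r < B -> a <= B ->
  count (fun b => (b + (B - r)) %% B < a) (iota 0 B) = a.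
Proof.
move=> rB aB.
have B0 : 0 < B by lia.
set f := fun b => (b + (B - r)) %% B.
rewrite -(count_map f (fun k => k < a)).
have pe : perm_eq (map f (iota 0 B)) (iota 0 B).
  apply: uniq_perm; first (rewrite map_inj_in_uniq ?iota_uniq //).
  - move=> x y; rewrite !mem_iota /= !add0n => xB yB; rewrite /f => /eqP.
    rewrite eqn_modDr => /eqP; rewrite !modn_small //.
  - exact: iota_uniq.
  move=> x; rewrite mem_iota /= add0n; apply/mapP/idP.
    by move=> [y _ ->]; rewrite ltn_pmod.
  move=> xB; exists ((x + r) %% B); first by rewrite mem_iota /= add0n ltn_pmod.
  rewrite /f modnDml -addnA subnKC ?(ltnW rB) // modnDr modn_small //.
rewrite ((permP pe) (fun k => k < a)).
rewrite -(subnKC aB) iotaD count_cat add0n.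
rewrite (eq_in_count (a2:=predT)); last by move=> x; rewrite mem_iota => /andP [_ ->].
rewrite count_predT size_iota (eq_in_count (a2:=pred0)); last first.
  by move=> x; rewrite mem_iota => /andP [h _]; rewrite /= ltnNge h.
by rewrite count_pred0 addn0.
Qed.
Lemma realize C N (part : 'I_N -> 'I_C) v B (a : 'I_N -> nat) :
  injective a -> (forall i, 0 < a i <= B) ->
  (forall c, \sum_i a i * (part i == c) <= B * v c) ->
  exists betas, feasD part v B betas.
Proof.
move=> ainj apos Hs.
pose s i := \sum_(j | (part j == part i) && (j < i)) a j.
pose k i b := (b + (B - s i %% B)) %% B.
pose ballot b := [set i | k i b < a i].
have Tup : forall i, s i + a i <= B * v (part i).
  move=> i; rewrite -Tsplit ?eqxx //; apply: leq_trans (Hs (part i)).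
  rewrite -sum_cond_mul; apply: sum_sub => j /andP [] //.
have mono : forall i j, part j = part i -> j < i -> s j + a j <= s i.
  move=> i j pe lt; rewrite -Tsplit ?eqxx //; apply: sum_sub => l /andP [h1 h2].
  by rewrite (eqP h1) pe eqxx /=; apply: leq_ltn_trans h2 lt.
have nv : forall i, nvotes (map ballot (iota 0 B)) i = a i.
  move=> i; rewrite /nvotes count_map.
  rewrite (eq_count (a2 := fun b => (b + (B - s i %% B)) %% B < a i)); last first.
    by move=> b; rewrite /= inE.
  have := apos i => /andP [h1 h2].
  by apply: rot_count; rewrite // ltn_pmod //; lia.
exists (map ballot (iota 0 B)); split.
- by rewrite size_map size_iota.
- move=> beta /mapP [b]; rewrite mem_iota add0n => /andP [_ bB] -> c.
  have B0 : 0 < B by lia.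
  pose f i := (s i + k i b) %/ B.
  apply: (@inj_bound _ _ f).
    move=> i j; rewrite !inE => /andP [/eqP pi ki] /andP [/eqP pj kj] e.
    have mi := modp (s i) bB; have mj := modp (s j) bB.
    have epp : s i + k i b = s j + k j b.
      by rewrite (divn_eq (s i + k i b) B) (divn_eq (s j + k j b) B) -/(f i) -/(f j) e /k mi mj.
    apply: val_inj; case: (ltngtP i j) => // lt.
    + have := mono j i (etrans pi (esym pj)) lt; lia.
    + have := mono i j (etrans pj (esym pi)) lt; lia.
  move=> i; rewrite !inE => /andP [/eqP pi ki].
  rewrite /f ltn_divLR // mulnC; have := Tup i; rewrite pi; lia.
- move=> i j ne; rewrite !nv; apply: contra ne => /eqP e; apply/eqP; exact: ainj.
- by move=> i; rewrite nv; have := apos i => /andP [].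
Qed.
Lemma M_to_D C N (part : 'I_N -> 'I_C) v B gamma :
  (forall c, 0 < v c) ->
  feasM part v B gamma -> exists betas, feasD part v B betas.
Proof.
move=> Hv [Hrow Hcol Hcon NB].
have Hc : forall c, \sum_g (g : 'I_N).+1 * gamma c g <= B * v c.
  move=> c; have h := Hcon c.
  rewrite ler_pdivrMl ?ltr0n ?Hv // in h.
  have e : (\sum_(g : 'I_N) ((g.+1)%:R * (gamma c g)%:R) : rat)%R
         = ((\sum_(g : 'I_N) g.+1 * gamma c g)%N)%:R%R.
    by rewrite natr_sum; apply: eq_bigr => g _; rewrite natrM.
  by rewrite e -natrM ler_nat mulnC in h.
have sz : forall c, size (enum (contest_set part c)) = size (enum (gamma c)).
  by move=> c; rewrite -!cardE -Hrow sum_b2n.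
pose idx i := index i (enum (contest_set part (part i))).
have inc : forall i, i \in enum (contest_set part (part i)).
  by move=> i; rewrite mem_enum inE.
have idxlt : forall i, idx i < size (enum (gamma (part i))).
  by move=> i; rewrite -sz index_mem.
pose sig i := nth i (enum (gamma (part i))) (idx i).
have gs : forall i, gamma (part i) (sig i).
  by move=> i; have := mem_nth i (idxlt i); rewrite mem_enum.
have sinj : injective sig.
  move=> i j e.
  have pe : part i = part j.
    apply/eqP; apply/negPn/negP => ne.
    have := Hcol (sig i); rewrite (bigD1 (part i)) // (bigD1 (part j)) /=; last by rewrite eq_sym.
    by rewrite gs e gs.
  move: e; rewrite /sig /idx pe (set_nth_default j i); last by rewrite -pe; exact: idxlt.
  move=> /eqP; rewrite nth_uniq ?enum_uniq //; last first.
    - by move: (idxlt j); rewrite /idx.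
    - by move: (idxlt i); rewrite /idx pe.
  move=> /eqP e.
  by rewrite -(nth_index j (inc j)) -e -pe (nth_index j (inc i)).
apply: (@realize _ _ part v B (fun i => (sig i).+1)).
- by move=> i j /succn_inj /val_inj /sinj.
- by move=> i /=; have := ltn_ord (sig i); lia.
- move=> c; apply: leq_trans (Hc c); rewrite [X in _ <= X](reindex_inj sinj).
  apply: leq_sum => i _; case: eqP => [<-|]; rewrite ?muln0 // gs //.
Qed.
Lemma min_ex (P : nat -> Prop) : (exists n, P n) -> exists m, P m /\ forall n, P n -> m <= n.
Proof.
move=> [n Pn]; elim: n {-2}n (leqnn n) Pn => [|k IH] n Hn Pn.
  exists n; split => // n' _; move: Hn; rewrite leqn0 => /eqP ->; done.
case: (classic (exists n', n' < n /\ P n')) => [[n' [lt Pn']]|no].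
  apply: (IH n') => //; lia.
exists n; split => // n' Pn'; rewrite leqNgt; apply/negP => lt; apply: no; by exists n'.
Qed.

Theorem proposition5 (C N : nat) (part : 'I_N -> 'I_C) (v : 'I_C -> nat)
  (Hnonempty : forall c : 'I_C, exists i : 'I_N, part i = c)
  (Hv : forall c : 'I_C, 0 < v c) :
  (exists B : nat, optD part v B /\ exists gamma, optM part v B gamma) /\
  (forall B gamma, optM part v B gamma -> exists betas, feasD part v B betas).
Proof.
have ex0 : exists B, exists gamma, feasM part v B gamma.
  exists (N * N), (gam part id); apply: gamma_feas => //.
    by case: N part Hnonempty => [|n] *; [|rewrite leq_pmulr].
  move=> c; apply: (@leq_trans (\sum_(i : 'I_N) N)).
    apply: leq_sum => i _; have := ltn_ord i; case: (part i == c) => /=; lia.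
  rewrite sum_nat_const card_ord; exact: leq_pmulr.
have [B0 [[g0 Hg0] Hmin]] := min_ex ex0.
split.
  exists B0; split; [split|].
  - exact: M_to_D Hv Hg0.
  - move=> B' betas' /(D_to_M Hv) h; exact: Hmin.
  exists g0; split => // B' g' h; apply: Hmin; by exists g'.
move=> B g [h _]; exact: M_to_D Hv h.
Qed.
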